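(* Let $P$ be a discrete Dubins path, let $ab$ be an inflection edge of $P$ (traversed from $a$ to $b$), and let $P'$ be the part of $P$ from $b$ to its last vertex. For $\varepsilon\in[0,1]$ let $P(\varepsilon)$ be the path obtained from $P$ by rigidly translating $P'$ by the vector $\varepsilon(a-b)$ (i.e. towards $a$ along $ab$ by distance $\varepsilon|ab|$) and replacing $ab$ by the segment from $a$ to $b+\varepsilon(a-b)$. Then there exists $\varepsilon>0$ such that $P(\varepsilon)$ is a discrete curvature-constrained path.
   Context: Fix an angle $\theta$ with $0\le\theta\le\pi/2$ such that $2\pi/\theta$ is an integer, and a length $\ell>0$. For a polygonal path, the turn at an internal vertex is the angle in $[0,\pi]$ between the direction of the incoming edge and the direction of the outgoing edge. An edge is short if its length is $<\ell$, normal if $=\ell$, long if $>\ell$. An edge $e$ with an adjacent edge at each end is an inflection edge if its two adjacent edges lie on opposite sides of the supporting line of $e$, and non-inflection otherwise. A discrete curvature-constrained path is a polygonal path such that: (i) the turn at every internal vertex is at most $\theta$; (ii) no two adjacent edges are both short; (iii) for every short non-inflection edge $ab$ with adjacent edges $a^-a$ and $bb^+$, the angle between the directions $\overrightarrow{a^-a}$ and $\overrightarrow{bb^+}$ is at most $\theta$. A configuration is a pair $(u,U)$ of a point $u$ and a vector $U$ of length $\ell$. A polygonal path $P$ with first vertex $u$ starts at $(u,U)$ if prepending the segment from $u-U$ to $u$ (the pre-edge) yields a discrete curvature-constrained path; $P$ with last vertex $v$ ends at $(v,V)$ if appending the segment from $v$ to $v+V$ (the post-edge) yields a discrete curvature-constrained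 path. A discrete Dubins path is a discrete curvature-constrained path of minimum length among all those starting at a given configuration $\mathcal U$ and ending at a given configuration $\mathcal V$. Standing assumption: paths make a non-zero turn at every internal vertex. *)

(* Defs.v *)
From Stdlib Require Import Reals List Arith.
Import ListNotations.
Open Scope R_scope.

Definition pt := (R * R)%type.

Definition vadd (p q : pt) : pt := (fst p + fst q, snd p + snd q).
Definition vsub (p q : pt) : pt := (fst p - fst q, snd p - snd q).
Definition vscale (c : R) (p : pt) : pt := (c * fst p, c * snd p).
Definition dot (p q : pt) : R := fst p * fst q + snd p * snd q.
Definition cross (p q : pt) : R := fst p * snd q - snd p * fst q.
Definition vnorm (p : pt) : R := sqrt (dot p p).

Definition angle (u v : pt) : R := acos (dot u v / (vnorm u * vnorm v)).

(* A polygonal path is the list of its vertices p_0, ..., p_n;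
   edge j is the segment p_j p_(j+1), for j+1 < length p. *)
Definition vtx (p : list pt) (i : nat) : pt := nth i p (0, 0).
Definition evec (p : list pt) (j : nat) : pt := vsub (vtx p (S j)) (vtx p j).
Definition elen (p : list pt) (j : nat) : R := vnorm (evec p j).

Definition path_length (p : list pt) : R :=
  fold_right Rplus 0 (map (elen p) (seq 0 (pred (length p)))).

(* turn at internal vertex p_(i+1) *)
Definition turn (p : list pt) (i : nat) : R := angle (evec p i) (evec p (S i)).

Definition short (l : R) (p : list pt) (j : nat) : Prop := elen p j < l.

(* edge j (with adjacent edges j-1 and j+1) is an inflection edge:
   the adjacent edges lie on (strictly) opposite sides of the supporting line *)
Definition inflection (p : list pt) (j : nat) : Prop :=
  cross (evec p j) (vsub (vtx p (pred j)) (vtx p j)) *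
  cross (evec p j) (vsub (vtx p (S (S j))) (vtx p j)) < 0.

Definition dcc_path (theta l : R) (p : list pt) : Prop :=
  p <> [] /\
  (forall j, (S j < length p)%nat -> evec p j <> (0, 0)) /\
  (forall i, (S (S i) < length p)%nat -> turn p i <= theta) /\
  (forall i, (S (S i) < length p)%nat -> ~ (short l p i /\ short l p (S i))) /\
  (forall j, (1 <= j)%nat -> (S (S j) < length p)%nat ->
     short l p j -> ~ inflection p j ->
     angle (evec p (pred j)) (evec p (S j)) <= theta).

Definition config (l : R) (u U : pt) : Prop := vnorm U = l.

Definition starts_at (theta l : R) (p : list pt) (u U : pt) : Prop :=
  p <> [] /\ vtx p 0 = u /\ dcc_path theta l (vsub u U :: p).

Definition ends_at (theta l : R) (p : list pt) (v V : pt) : Prop :=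
  p <> [] /\ last p (0, 0) = v /\ dcc_path theta l (p ++ [vadd v V]).

Definition dubins_path (theta l : R) (p : list pt) (u U v V : pt) : Prop :=
  dcc_path theta l p /\ starts_at theta l p u U /\ ends_at theta l p v V /\
  forall q, dcc_path theta l q -> starts_at theta l q u U -> ends_at theta l q v V ->
    path_length p <= path_length q.

(* P(eps): vertices after p_j (i.e. from b = p_(j+1) on) translated by eps (a - b) *)
Definition shift_path (p : list pt) (j : nat) (eps : R) : list pt :=
  map (fun i => if Nat.leb i j then vtx p i
                else vadd (vtx p i) (vscale eps (vsub (vtx p j) (vtx p (S j)))))
      (seq 0 (length p)).

(* Main.v *)
Require Import Defs.
From Stdlib Require Import Reals List Arith Lra Lia Psatz.
Import ListNotations.
Open Scope R_scope.

Lemma dot_self_pos (u : pt) : u <> (0,0) -> 0 < dot u u.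
Proof.
  destruct u as [x y]; unfold dot; simpl; intro H.
  destruct (Req_dec x 0); destruct (Req_dec y 0); subst; try (exfalso; apply H; reflexivity); nra.
Qed.

Lemma dot_self_ge0 (u : pt) : 0 <= dot u u.
Proof. destruct u; unfold dot; simpl; nra. Qed.

Lemma vnorm_sq (u : pt) : vnorm u * vnorm u = dot u u.
Proof. unfold vnorm; apply sqrt_sqrt, dot_self_ge0. Qed.

Lemma vnorm_ge0 u : 0 <= vnorm u.
Proof. unfold vnorm; apply sqrt_pos. Qed.

Lemma vnorm_pos u : u <> (0,0) -> 0 < vnorm u.
Proof. intro H; unfold vnorm; apply sqrt_lt_R0, dot_self_pos, H. Qed.

Lemma lagrange (u v : pt) : dot u v * dot u v + cross u v * cross u v = dot u u * dot v v.
Proof. destruct u, v; unfold dot, cross; simpl; ring. Qed.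

Lemma angle_le (u v : pt) (th : R) : u <> (0,0) -> v <> (0,0) -> 0 <= th <= PI ->
  (angle u v <= th <-> cos th * (vnorm u * vnorm v) <= dot u v).
Proof.
  intros Hu Hv Hth.
  pose proof (vnorm_pos u Hu) as Nu. pose proof (vnorm_pos v Hv) as Nv.
  pose proof (vnorm_sq u) as Su. pose proof (vnorm_sq v) as Sv.
  pose proof (lagrange u v) as L.
  set (r := dot u v / (vnorm u * vnorm v)).
  assert (Hr : -1 <= r <= 1).
  { unfold r. assert (0 < vnorm u * vnorm v) by nra.
    assert (dot u v * dot u v <= (vnorm u * vnorm v) * (vnorm u * vnorm v)) by nra.
    split.
    - apply (Rmult_le_reg_r (vnorm u * vnorm v)); auto.
      unfold Rdiv; rewrite Rmult_assoc, Rinv_l by lra. nra.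
    - apply (Rmult_le_reg_r (vnorm u * vnorm v)); auto.
      unfold Rdiv; rewrite Rmult_assoc, Rinv_l by lra. nra. }
  assert (Hiff : cos th * (vnorm u * vnorm v) <= dot u v <-> cos th <= r).
  { unfold r. assert (0 < vnorm u * vnorm v) by nra. split; intro H1.
    - apply (Rmult_le_reg_r (vnorm u * vnorm v)); auto.
      unfold Rdiv; rewrite Rmult_assoc, Rinv_l by lra. lra.
    - apply (Rmult_le_compat_r (vnorm u * vnorm v)) in H1; [|lra].
      unfold Rdiv in H1; rewrite Rmult_assoc, Rinv_l in H1 by lra. lra. }
  rewrite Hiff. unfold angle. fold r.
  pose proof (acos_bound r). pose proof (cos_acos r Hr).
  split; intro H1.
  - destruct (Req_dec (acos r) th) as [E|E].
    + rewrite <- E; lra.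
    + pose proof (cos_decreasing_1 (acos r) th ltac:(lra) ltac:(lra) ltac:(lra) ltac:(lra) ltac:(lra)). lra.
  - destruct (Rle_dec (acos r) th); auto.
    pose proof (cos_decreasing_1 th (acos r) ltac:(lra) ltac:(lra) ltac:(lra) ltac:(lra) ltac:(lra)). lra.
Qed.

Lemma sq_le_nonneg x y : 0 <= x -> 0 <= y -> y*y <= x*x -> y <= x.
Proof. intros; nra. Qed.

Lemma same_side_half a1 b1 a2 b2 P Q C : 0 < P -> 0 < Q -> 0 <= C ->
  a1*a1 + b1*b1 = P*P -> a2*a2 + b2*b2 = Q*Q -> C*P <= a1 -> C*Q <= a2 -> 0 <= b1*b2 ->
  a1 * Q <= a2 * P -> C*P*Q <= a1*a2 + b1*b2.
Proof.
  intros HP HQ HC E1 E2 H1 H2 Hb Hw.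
  assert (a1 >= 0) by nra. assert (a2 >= 0) by nra.
  assert (Ha2Q : a2 <= Q) by nra. assert (Ha1P : a1 <= P) by nra.
  set (D := Q - a2).
  assert (K1 : a1*a1*Q <= P*P*Q) by nra.
  assert (K2 : a1*a1*Q <= P*P*a2).
  { assert (a1*(a1*Q) <= a1*(a2*P)) by nra. assert (a1*a2*P <= P*a2*P) by nra. nra. }
  assert (Hin : 0 <= (P*P - a1*a1)*(Q+a2) - a1*a1*D) by (unfold D; nra).
  assert (Hsq : (a1*D)*(a1*D) <= (b1*b2)*(b1*b2)).
  { replace ((b1*b2)*(b1*b2)) with ((P*P - a1*a1)*(Q+a2)*D) by (unfold D; nra).
    assert (0 <= D) by (unfold D; lra).
    assert (0 <= D * ((P*P - a1*a1)*(Q+a2) - a1*a1*D)) by nra. nra. }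
  assert (a1*D <= b1*b2) by (apply sq_le_nonneg; unfold D in *; nra).
  unfold D in *. nra.
Qed.

Lemma same_side_core a1 b1 a2 b2 P Q C : 0 < P -> 0 < Q -> 0 <= C ->
  a1*a1 + b1*b1 = P*P -> a2*a2 + b2*b2 = Q*Q -> C*P <= a1 -> C*Q <= a2 -> 0 <= b1*b2 ->
  C*P*Q <= a1*a2 + b1*b2.
Proof.
  intros. destruct (Rle_dec (a1*Q) (a2*P)).
  - apply same_side_half; auto.
  - replace (C*P*Q) with (C*Q*P) by ring. replace (a1*a2+b1*b2) with (a2*a1+b2*b1) by ring.
    apply same_side_half; try nra.
Qed.

Lemma pt_eq (a b : pt) : fst a = fst b -> snd a = snd b -> a = b.
Proof. destruct a, b; simpl; intros; subst; reflexivity. Qed.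

Lemma dot_sym u v : dot u v = dot v u.
Proof. destruct u, v; unfold dot; simpl; ring. Qed.

Lemma angle_sym u v : angle u v = angle v u.
Proof. unfold angle; rewrite dot_sym, Rmult_comm; reflexivity. Qed.

Lemma vnorm_scale c u : 0 <= c -> vnorm (vscale c u) = c * vnorm u.
Proof.
  intro Hc. unfold vnorm. replace (dot (vscale c u) (vscale c u)) with ((c*c) * dot u u)
    by (destruct u; unfold dot, vscale; simpl; ring).
  rewrite sqrt_mult_alt by nra. rewrite sqrt_square by lra. reflexivity.
Qed.

Lemma angle_scale_l c u v : 0 < c -> angle (vscale c u) v = angle u v.
Proof.
  intro Hc. unfold angle. rewrite vnorm_scale by lra.
  replace (dot (vscale c u) v) with (c * dot u v) by (destruct u, v; unfold dot, vscale; simpl; ring).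
  destruct (Req_dec (vnorm u * vnorm v) 0) as [Z|Z].
  - replace (c * vnorm u * vnorm v) with (c * (vnorm u * vnorm v)) by ring. rewrite Z.
    rewrite Rmult_0_r. unfold Rdiv; rewrite !Rinv_0; f_equal; ring.
  - f_equal. replace (c * vnorm u * vnorm v) with (c * (vnorm u * vnorm v)) by ring.
    field. repeat split; intro; apply Z; try rewrite H; ring || lra.
Qed.

Lemma angle_scale_r c u v : 0 < c -> angle u (vscale c v) = angle u v.
Proof. intro; rewrite angle_sym, angle_scale_l by auto; apply angle_sym. Qed.

Lemma vscale_nz c u : c <> 0 -> u <> (0,0) -> vscale c u <> (0,0).
Proof.
  destruct u as [x y]; unfold vscale; simpl; intros Hc Hu E. injection E; intros.
  apply Hu. apply Rmult_integral in H; apply Rmult_integral in H0.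
  destruct H, H0; try lra; subst; auto.
Qed.

Lemma cross_dot_id e x y : dot x y * dot e e = dot e x * dot e y + cross e x * cross e y.
Proof. destruct e, x, y; unfold dot, cross; simpl; ring. Qed.

Lemma same_side_vec e x y C : e <> (0,0) -> x <> (0,0) -> y <> (0,0) -> 0 <= C ->
  C * (vnorm e * vnorm x) <= dot e x -> C * (vnorm e * vnorm y) <= dot e y ->
  0 <= cross e x * cross e y -> C * (vnorm x * vnorm y) <= dot x y.
Proof.
  intros He Hx Hy HC H1 H2 H3.
  pose proof (vnorm_pos e He). pose proof (vnorm_pos x Hx). pose proof (vnorm_pos y Hy).
  pose proof (vnorm_sq e). pose proof (vnorm_sq x). pose proof (vnorm_sq y).
  pose proof (lagrange e x). pose proof (lagrange e y). pose proof (cross_dot_id e x y).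
  assert (K : C * (vnorm e * vnorm x) * (vnorm e * vnorm y) <= dot e x * dot e y + cross e x * cross e y).
  { apply same_side_core; try nra. }
  assert (0 < dot e e) by nra.
  assert (C * (vnorm x * vnorm y) * dot e e <= dot x y * dot e e) by nra.
  nra.
Qed.

Lemma same_side e x y th : e <> (0,0) -> x <> (0,0) -> y <> (0,0) -> 0 <= th <= PI/2 ->
  angle e x <= th -> angle e y <= th -> 0 <= cross e x * cross e y -> angle x y <= th.
Proof.
  intros He Hx Hy Hth A1 A2 Hc. pose proof PI_RGT_0.
  assert (Hc0 : 0 <= cos th) by (apply cos_ge_0; lra).
  apply angle_le in A1; try lra; auto. apply angle_le in A2; try lra; auto.
  apply angle_le; auto; try lra. apply (same_side_vec e x y); auto.
Qed.

Lemma angle_dot_nonneg u v th : u <> (0,0) -> v <> (0,0) -> 0 <= th <= PI/2 -> angle u v <= th -> 0 <= dot u v.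
Proof.
  intros Hu Hv Hth A. pose proof PI_RGT_0.
  assert (0 <= cos th) by (apply cos_ge_0; lra).
  apply angle_le in A; auto; try lra. assert (0 <= vnorm u * vnorm v) by (apply Rmult_le_pos; apply vnorm_ge0). assert (0 <= cos th * (vnorm u * vnorm v)) by (apply Rmult_le_pos; lra). lra.
Qed.

Lemma between_nz e f t : e <> (0,0) -> 0 <= dot e f -> 0 <= t -> vadd e (vscale t f) <> (0,0).
Proof.
  intros He Hd Ht E. pose proof (dot_self_pos e He).
  assert (dot e (vadd e (vscale t f)) = dot e e + t * dot e f) by (destruct e, f; unfold dot, vadd, vscale; simpl; ring).
  rewrite E in H0. unfold dot at 1 in H0; simpl in H0. nra.
Qed.

Lemma between_norm e f t : 0 <= dot e f -> 0 <= t -> vnorm e <= vnorm (vadd e (vscale t f)).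
Proof.
  intros Hd Ht. unfold vnorm. apply sqrt_le_1_alt.
  assert (dot (vadd e (vscale t f)) (vadd e (vscale t f)) = dot e e + 2*t*dot e f + t*t*dot f f)
    by (destruct e, f; unfold dot, vadd, vscale; simpl; ring).
  rewrite H. pose proof (dot_self_ge0 f). nra.
Qed.

Lemma between1 e f t th : e <> (0,0) -> f <> (0,0) -> 0 <= th <= PI/2 -> 0 <= t ->
  angle e f <= th -> angle e (vadd e (vscale t f)) <= th.
Proof.
  intros He Hf Hth Ht A. pose proof PI_RGT_0.
  assert (HC : 0 <= cos th) by (apply cos_ge_0; lra). pose proof (COS_bound th) as [_ HC1].
  assert (Hd : 0 <= dot e f) by (eapply angle_dot_nonneg; eauto).
  pose proof (between_nz e f t He Hd Ht) as Hnz.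
  apply angle_le in A; auto; try lra. apply angle_le; auto; try lra.
  set (g := vadd e (vscale t f)) in *.
  assert (Eg : dot g g = dot e e + 2*t*dot e f + t*t*dot f f) by (unfold g; destruct e, f; unfold dot, vadd, vscale; simpl; ring).
  assert (Eeg : dot e g = dot e e + t * dot e f) by (unfold g; destruct e, f; unfold dot, vadd, vscale; simpl; ring).
  pose proof (vnorm_sq e). pose proof (vnorm_sq f). pose proof (vnorm_sq g).
  pose proof (vnorm_ge0 e). pose proof (vnorm_ge0 f). pose proof (vnorm_ge0 g).
  assert (0 <= dot e e) by apply dot_self_ge0.
  apply sq_le_nonneg; [rewrite Eeg; nra| apply Rmult_le_pos; [lra| apply Rmult_le_pos; auto]|].
  assert (Hd2 : (cos th)*(cos th)*(dot e e * dot f f) <= dot e f * dot e f).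
  { assert (0 <= cos th * (vnorm e * vnorm f)) by (apply Rmult_le_pos; [lra| apply Rmult_le_pos; auto]).
    assert (cos th * (vnorm e * vnorm f) * (cos th * (vnorm e * vnorm f)) <= dot e f * dot e f) by (apply Rmult_le_compat; lra).
    replace (cos th * cos th * (dot e e * dot f f)) with (cos th * (vnorm e * vnorm f) * (cos th * (vnorm e * vnorm f))) by (rewrite <- H0, <- H1; ring). lra. }
  replace (cos th * (vnorm e * vnorm g) * (cos th * (vnorm e * vnorm g))) with
    ((cos th * cos th) * (dot e e * dot g g)) by nra.
  rewrite Eg, Eeg.
  assert (cos th * cos th <= 1) by nra.
  set (K := cos th * cos th) in *. pose proof (dot_self_ge0 f).
  assert (0 <= dot e e * dot e e * (1-K)) by (apply Rmult_le_pos; nra).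
  assert (0 <= 2*t*dot e f*dot e e * (1-K)) by (apply Rmult_le_pos; [|lra]; apply Rmult_le_pos; [|lra]; apply Rmult_le_pos; nra).
  assert (0 <= t*t*(dot e f * dot e f - K*(dot e e*dot f f))) by (apply Rmult_le_pos; nra).
  nra.
Qed.

Lemma between2 e f t th : e <> (0,0) -> f <> (0,0) -> 0 <= th <= PI/2 -> 0 <= t ->
  angle e f <= th -> angle (vadd e (vscale t f)) f <= th.
Proof.
  intros He Hf Hth Ht A. pose proof PI_RGT_0.
  assert (HC : 0 <= cos th) by (apply cos_ge_0; lra). pose proof (COS_bound th) as [_ HC1].
  assert (Hd : 0 <= dot e f) by (eapply angle_dot_nonneg; eauto).
  pose proof (between_nz e f t He Hd Ht) as Hnz.
  apply angle_le in A; auto; try lra. apply angle_le; auto; try lra.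
  set (g := vadd e (vscale t f)) in *.
  assert (Eg : dot g g = dot e e + 2*t*dot e f + t*t*dot f f) by (unfold g; destruct e, f; unfold dot, vadd, vscale; simpl; ring).
  assert (Eeg : dot g f = dot e f + t * dot f f) by (unfold g; destruct e, f; unfold dot, vadd, vscale; simpl; ring).
  pose proof (vnorm_sq e). pose proof (vnorm_sq f). pose proof (vnorm_sq g).
  pose proof (vnorm_ge0 e). pose proof (vnorm_ge0 f). pose proof (vnorm_ge0 g).
  assert (0 <= dot f f) by apply dot_self_ge0.
  apply sq_le_nonneg; [rewrite Eeg; pose proof (dot_self_ge0 f); nra| apply Rmult_le_pos; [lra| apply Rmult_le_pos; auto]|].
  assert (Hd2 : (cos th)*(cos th)*(dot e e * dot f f) <= dot e f * dot e f).
  { assert (0 <= cos th * (vnorm e * vnorm f)) by (apply Rmult_le_pos; [lra| apply Rmult_le_pos; auto]).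
    assert (cos th * (vnorm e * vnorm f) * (cos th * (vnorm e * vnorm f)) <= dot e f * dot e f) by (apply Rmult_le_compat; lra).
    replace (cos th * cos th * (dot e e * dot f f)) with (cos th * (vnorm e * vnorm f) * (cos th * (vnorm e * vnorm f))) by (rewrite <- H0, <- H1; ring). lra. }
  replace (cos th * (vnorm g * vnorm f) * (cos th * (vnorm g * vnorm f))) with
    ((cos th * cos th) * (dot g g * dot f f)) by nra.
  rewrite Eg, Eeg.
  assert (cos th * cos th <= 1) by nra.
  set (K := cos th * cos th) in *. pose proof (dot_self_ge0 e).
  assert (0 <= dot f f * dot f f * (1-K)) by (apply Rmult_le_pos; nra).
  assert (0 <= 2*t*dot e f*dot f f * (1-K)) by (apply Rmult_le_pos; [|lra]; apply Rmult_le_pos; [|lra]; apply Rmult_le_pos; nra).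
  assert (0 <= (dot e f * dot e f - K*(dot e e*dot f f))) by nra.
  nra.
Qed.

Definition infl_ev (E : nat -> pt) j := 0 < cross (E j) (E (pred j)) * cross (E j) (E (S j)).
Definition dcc_ev th l n (E : nat -> pt) : Prop :=
  (0 < n)%nat /\ (forall j, (S j < n)%nat -> E j <> (0,0)) /\
  (forall i, (S (S i) < n)%nat -> angle (E i) (E (S i)) <= th) /\
  (forall i, (S (S i) < n)%nat -> ~ (vnorm (E i) < l /\ vnorm (E (S i)) < l)) /\
  (forall j, (1 <= j)%nat -> (S (S j) < n)%nat -> vnorm (E j) < l -> ~ infl_ev E j ->
     angle (E (pred j)) (E (S j)) <= th).

Lemma infl_iff L j : (1 <= j)%nat -> (inflection L j <-> infl_ev (evec L) j).
Proof.
  intro Hj. destruct j as [|j]; [lia|]. unfold inflection, infl_ev, evec, cross, vsub. simpl pred.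
  destruct (vtx L j) as [a1 a2], (vtx L (S j)) as [b1 b2], (vtx L (S (S j))) as [c1 c2],
    (vtx L (S (S (S j)))) as [d1 d2]. simpl.
  match goal with |- ?P < 0 <-> 0 < ?Q => assert (P = - Q) by ring end. lra.
Qed.

Lemma dcc_iff th l L : dcc_path th l L <-> dcc_ev th l (length L) (evec L).
Proof.
  unfold dcc_path, dcc_ev, short, elen. split.
  - intros [H0 [H1 [H2 [H3 H4]]]]. repeat split; auto.
    + destruct L; [congruence| simpl; lia].
    + intros j Hj1 Hj2 Hs Hi. apply H4; auto. rewrite infl_iff; auto.
  - intros [H0 [H1 [H2 [H3 H4]]]]. repeat split; auto.
    + destruct L; simpl in H0; [lia| congruence].
    + intros j Hj1 Hj2 Hs Hi. apply H4; auto. rewrite <- infl_iff; auto.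
Qed.

Lemma dcc_ev_ext th l n E E' : (forall i, (S i < n)%nat -> E' i = E i) -> dcc_ev th l n E -> dcc_ev th l n E'.
Proof.
  intros HE [H0 [H1 [H2 [H3 H4]]]]. unfold dcc_ev, infl_ev in *.
  repeat split; auto.
  - intros; rewrite HE by lia; auto.
  - intros; rewrite !HE by lia; auto.
  - intros; rewrite !HE by lia; auto.
  - intros j Hj1 Hj2. destruct j as [|j]; [lia|]. simpl pred. rewrite !HE by lia.
    specialize (H4 (S j) Hj1 Hj2). simpl pred in H4. auto.
Qed.

Lemma vtx_map f n i : (i < n)%nat -> vtx (map f (seq 0 n)) i = f i.
Proof.
  intro H. unfold vtx. rewrite nth_indep with (d' := f 0%nat) by (rewrite length_map, length_seq; lia).
  rewrite map_nth, seq_nth by lia. reflexivity.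
Qed.

Lemma vtx_out L i : (length L <= i)%nat -> vtx L i = (0,0).
Proof. intro; unfold vtx; apply nth_overflow; auto. Qed.

Lemma cross_scale_l c u v : cross (vscale c u) v = c * cross u v.
Proof. destruct u, v; unfold cross, vscale; simpl; ring. Qed.
Lemma cross_scale_r c u v : cross u (vscale c v) = c * cross u v.
Proof. destruct u, v; unfold cross, vscale; simpl; ring. Qed.

Definition scl (E : nat -> pt) j c i := if Nat.eq_dec i j then vscale c (E j) else E i.

Lemma pos_mul_iff c x : 0 < c -> (0 < c * x <-> 0 < x).
Proof. intro; split; intro; nra. Qed.

Lemma scale_dcc th l n E j c : dcc_ev th l n E -> (1 <= j)%nat -> (S (S j) < n)%nat -> 0 < c ->
  infl_ev E j ->
  (vnorm (vscale c (E j)) < l -> ~ vnorm (E (pred j)) < l /\ ~ vnorm (E (S j)) < l) ->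
  dcc_ev th l n (scl E j c).
Proof.
  intros [H0 [H1 [H2 [H3 H4]]]] Hj1 Hj2 Hc Hinf Hsh. unfold dcc_ev, infl_ev in *. unfold scl.
  repeat split; auto.
  - intros i Hi. destruct (Nat.eq_dec i j); auto. subst. apply vscale_nz; auto; lra.
  - intros i Hi. destruct (Nat.eq_dec i j), (Nat.eq_dec (S i) j); try (exfalso; lia); subst.
    + rewrite angle_scale_l; auto.
    + rewrite angle_scale_r; auto.
    + auto.
  - intros i Hi. destruct (Nat.eq_dec i j), (Nat.eq_dec (S i) j); try (exfalso; lia); subst.
    + intros [A B]. apply Hsh in A. tauto.
    + intros [A B]. apply Hsh in B. simpl in B. tauto.
    + auto.
  - intros m Hm1 Hm2 Hs Hi. destruct (Nat.eq_dec m j).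
    + subst. exfalso. apply Hi.
      destruct (Nat.eq_dec (pred j) j); [lia|]. destruct (Nat.eq_dec (S j) j); [lia|].
      rewrite !cross_scale_l. replace (c * cross (E j) (E (pred j)) * (c * cross (E j) (E (S j))))
        with ((c*c) * (cross (E j) (E (pred j)) * cross (E j) (E (S j)))) by ring.
      apply Rmult_lt_0_compat; nra.
    + destruct (Nat.eq_dec (pred m) j), (Nat.eq_dec (S m) j); try (exfalso; lia).
      * rewrite <- e in *. rewrite angle_scale_l by auto. rewrite cross_scale_r in Hi. apply H4; auto.
        intro Hi2. apply Hi. rewrite Rmult_assoc. apply Rmult_lt_0_compat; auto.
      * rewrite <- e in *. rewrite angle_scale_r by auto. rewrite cross_scale_r in Hi. apply H4; auto.
        intro Hi2. apply Hi. replace (cross (E m) (E (pred m)) * (c * cross (E m) (E (S m)))) with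
          (c * (cross (E m) (E (pred m)) * cross (E m) (E (S m)))) by ring. apply Rmult_lt_0_compat; auto.
      * apply H4; auto.
Qed.

Lemma cross_self_add e f t : cross e (vadd e (vscale t f)) = t * cross e f.
Proof. destruct e, f; unfold cross, vadd, vscale; simpl; ring. Qed.
Lemma cross_add_self f e t : cross f (vadd e (vscale t f)) = cross f e.
Proof. destruct e, f; unfold cross, vadd, vscale; simpl; ring. Qed.
Lemma cross_add w e f t : cross w (vadd e (vscale t f)) = cross w e + t * cross w f.
Proof. destruct w, e, f; unfold cross, vadd, vscale; simpl; ring. Qed.
Lemma cross_anti u v : cross u v = - cross v u.
Proof. destruct u, v; unfold cross; simpl; ring. Qed.
Lemma ident3 e f g : cross e g * dot f f = dot f g * cross e f + dot e f * cross f g.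
Proof. destruct e, f, g; unfold cross, dot; simpl; ring. Qed.

Lemma small_sign A B t : 0 <= t -> t * Rabs B < Rabs A -> 0 < A * (A + t * B).
Proof.
  intros Ht H. unfold Rabs in H.
  assert (T : 0 <= t * Rabs B) by (apply Rmult_le_pos; auto; apply Rabs_pos).
  unfold Rabs in T.
  destruct (Rcase_abs B), (Rcase_abs A).
  - assert (A + t*B < 0) by lra. replace (A * (A + t*B)) with ((-A) * (-(A+t*B))) by ring. apply Rmult_lt_0_compat; lra.
  - assert (0 < A + t*B) by lra. apply Rmult_lt_0_compat; lra.
  - assert (A + t*B < 0) by lra. replace (A * (A + t*B)) with ((-A) * (-(A+t*B))) by ring. apply Rmult_lt_0_compat; lra.
  - assert (0 < A + t*B) by lra. apply Rmult_lt_0_compat; lra.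
Qed.

Ltac sd := repeat match goal with
 | |- context [Nat.eq_dec ?a ?b] => destruct (Nat.eq_dec a b); try (exfalso; lia)
 | H : context [Nat.eq_dec ?a ?b] |- _ => destruct (Nat.eq_dec a b); try (exfalso; lia)
 end.

Definition mvf (E : nat -> pt) j t i :=
  if Nat.eq_dec i j then vadd (E j) (vscale t (E (S j)))
  else if Nat.eq_dec i (S j) then vscale (1-t) (E (S j)) else E i.

Lemma move_fwd th l n E j t : 0 < th <= PI/2 -> dcc_ev th l n E -> (1 <= j)%nat -> (S (S j) < n)%nat ->
  ~ vnorm (E j) < l -> vnorm (E (S j)) < l -> infl_ev E j -> 0 < t < 1 ->
  t * Rabs (cross (E (pred j)) (E (S j))) < Rabs (cross (E (pred j)) (E j)) ->
  dcc_ev th l n (mvf E j t).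
Proof.
  intros Hth HD Hj1 Hj2 Hne Hsf Hinf Ht Hsmall.
  pose proof PI_RGT_0 as PIpos.
  destruct j as [|j]; [lia|]. simpl pred in *.
  destruct HD as [H0 [H1 [H2 [H3 H4]]]].
  set (w := E j) in *. set (e := E (S j)) in *. set (f := E (S (S j))) in *.
  assert (Hw : w <> (0,0)) by (apply H1; lia).
  assert (He : e <> (0,0)) by (apply H1; lia).
  assert (Hf : f <> (0,0)) by (apply H1; lia).
  assert (Awe : angle w e <= th) by (apply H2; lia).
  assert (Aef : angle e f <= th) by (apply H2; lia).
  assert (Hth' : 0 <= th <= PI/2) by lra.
  assert (Def : 0 <= dot e f) by (eapply angle_dot_nonneg; eauto).
  assert (Dwe : 0 <= dot w e) by (eapply angle_dot_nonneg; eauto).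
  set (e' := vadd e (vscale t f)).
  assert (He' : e' <> (0,0)) by (apply between_nz; auto; lra).
  assert (Ne' : vnorm e <= vnorm e') by (apply between_norm; lra).
  assert (Aee' : angle e e' <= th) by (apply between1; auto; lra).
  assert (Ae'f : angle e' f <= th) by (apply between2; auto; lra).
  unfold infl_ev in Hinf. simpl pred in Hinf. fold w e f in Hinf.
  assert (Hc1 : 0 < 1 - t) by lra.
  unfold dcc_ev, infl_ev, mvf. fold e' w e f. repeat split; auto.
  - intros i Hi. sd; subst; auto; apply vscale_nz; auto; lra.
  - intros i Hi. sd; subst; fold e' w e f.
    + rewrite angle_scale_r by lra. exact Ae'f.
    + rewrite angle_scale_l by lra. apply H2; auto.
    + replace i with j by lia. fold w. apply (same_side e); auto. rewrite angle_sym; auto.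
      unfold e'; rewrite cross_self_add. rewrite (Rmult_comm t), <- Rmult_assoc.
      apply Rmult_le_pos; [|lra]. lra.
    + apply H2; auto.
  - intros i Hi. sd; subst; fold e' w e f.
    + intros [A B]; lra.
    + rewrite vnorm_scale by lra. intros [A B]. apply (H3 (S (S j))); auto.
    + intros [A B]; lra.
    + apply H3; auto.
  - intros m Hm1 Hm2 Hs Hi.
    assert (C : m = S j \/ m = S (S j) \/ m = S (S (S j)) \/ m = j \/
      (m <> S j /\ m <> S (S j) /\ m <> S (S (S j)) /\ m <> j)) by lia.
    destruct C as [C|[C|[C|[C|C]]]].
    + subst m. sd. fold e' in Hs. lra.
    + subst m. simpl pred in *. sd. fold e' w e f in Hs. fold e' w e f in Hi. fold e' w e f.
      rewrite vnorm_scale in Hs by lra.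
      set (g := E (S (S (S j)))) in *.
      assert (Hg : g <> (0,0)) by (apply H1; lia).
      assert (Afg : angle f g <= th) by (apply H2; lia).
      assert (Dfg : 0 <= dot f g) by (eapply angle_dot_nonneg; eauto).
      assert (Ninf : ~ (0 < cross f e * cross f g)).
      { intro X. apply Hi. rewrite !cross_scale_l. unfold e'; rewrite cross_add_self.
        replace ((1 - t) * cross f e * ((1 - t) * cross f g)) with (((1-t)*(1-t)) * (cross f e * cross f g)) by ring.
        apply Rmult_lt_0_compat; nra. }
      assert (Aeg : angle e g <= th).
      { specialize (H4 (S (S j)) ltac:(lia) ltac:(lia) Hsf). simpl pred in H4. apply H4. exact Ninf. }
      apply (same_side e); auto.
      pose proof (ident3 e f g) as I3. pose proof (dot_self_pos f Hf). rewrite (cross_anti f e) in Ninf.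
      apply Rnot_lt_le in Ninf.
      assert (Q : 0 <= cross e f * cross f g) by nra.
      assert (Q2 : 0 <= cross e f * cross e g * dot f f).
      { replace (cross e f * cross e g * dot f f) with (dot f g * (cross e f * cross e f) + dot e f * (cross e f * cross f g))
          by (rewrite Rmult_assoc, I3; ring).
        apply Rplus_le_le_0_compat; apply Rmult_le_pos; nra. }
      assert (Q3 : 0 <= cross e f * cross e g).
      { apply (Rmult_le_reg_r (dot f f)); auto. lra. }
      replace (cross e e' * cross e g) with (t * (cross e f * cross e g)) by (unfold e'; rewrite cross_self_add; ring).
      apply Rmult_le_pos; lra.
    + subst m. sd. fold e' w e f in Hs. fold e' w e f in Hi. fold e' w e f. set (g := E (S (S (S j)))) in *.
      exfalso. apply (H3 (S (S j))); [lia|]. split; auto.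
    + subst m. simpl pred in *. sd. fold e' w e f in Hs. fold e' w e f in Hi. fold e' w e f.
      destruct j as [|j0]; [lia|]. simpl pred in *.
      set (x := E j0) in *.
      assert (Hx : x <> (0,0)) by (apply H1; lia).
      assert (Axw : angle x w <= th) by (apply H2; lia).
      assert (Dxw : 0 <= dot x w) by (eapply angle_dot_nonneg; eauto).
      assert (Sgn : 0 < cross w e * cross w e') by (unfold e'; rewrite cross_add; apply small_sign; lra).
      assert (Ninf : ~ (0 < cross w x * cross w e)).
      { intro X. apply Hi. assert (0 < (cross w x * cross w e) * (cross w e * cross w e')) by nra.
        assert (0 < cross w e * cross w e) by nra. nra. }
      assert (Axe : angle x e <= th).
      { specialize (H4 (S j0) ltac:(lia) ltac:(lia) Hs). simpl pred in H4. apply H4. exact Ninf. }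
      apply (same_side e); auto. rewrite angle_sym; auto.
      unfold e'; rewrite cross_self_add.
      pose proof (ident3 e w x). pose proof (dot_self_pos w Hw).
      rewrite (dot_sym x w) in Dxw. rewrite (dot_sym w e) in Dwe.
      apply Rnot_lt_le in Ninf. rewrite (cross_anti w e) in Ninf.
      rename H into I3.
      assert (Q1 : 0 <= cross w x * cross e w) by nra.
      assert (Cew : 0 < cross e w * cross e w).
      { destruct (Req_dec (cross e w) 0) as [Z|Z]; [rewrite Z in Hinf; lra| nra]. }
      assert (Q2 : 0 <= cross w x * cross e f).
      { apply (Rmult_le_reg_r (cross e w * cross e w)); auto. rewrite Rmult_0_l.
        replace (cross w x * cross e f * (cross e w * cross e w)) with ((cross w x * cross e w) * (cross e w * cross e f)) by ring.
        apply Rmult_le_pos; lra. }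
      assert (Q3 : 0 <= cross e x * cross e f * dot w w).
      { replace (cross e x * cross e f * dot w w) with (dot w x * (cross e w * cross e f) + dot e w * (cross w x * cross e f))
          by (symmetry; transitivity ((cross e x * dot w w) * cross e f); [ring| rewrite I3; ring]).
        apply Rplus_le_le_0_compat; apply Rmult_le_pos; lra. }
      assert (Q4 : 0 <= cross e x * cross e f).
      { apply (Rmult_le_reg_r (dot w w)); auto. lra. }
      replace (cross e x * (t * cross e f)) with (t * (cross e x * cross e f)) by ring.
      apply Rmult_le_pos; lra.
    + destruct C as [C1 [C2 [C3 C4]]]. sd. apply H4; auto.
Qed.

Definition mvb (E : nat -> pt) j t i :=
  if Nat.eq_dec (S i) j then vscale (1-t) (E (pred j))
  else if Nat.eq_dec i j then vadd (E j) (vscale t (E (pred j))) else E i.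

Lemma move_bwd th l n E j t : 0 < th <= PI/2 -> dcc_ev th l n E -> (1 <= j)%nat -> (S (S j) < n)%nat ->
  ~ vnorm (E j) < l -> vnorm (E (pred j)) < l -> infl_ev E j -> 0 < t < 1 ->
  t * Rabs (cross (E (S j)) (E (pred j))) < Rabs (cross (E (S j)) (E j)) ->
  dcc_ev th l n (mvb E j t).
Proof.
  intros Hth HD Hj1 Hj2 Hne Hsw Hinf Ht Hsmall.
  pose proof PI_RGT_0 as PIpos.
  destruct j as [|j]; [lia|]. simpl pred in *.
  destruct HD as [H0 [H1 [H2 [H3 H4]]]].
  set (w := E j) in *. set (e := E (S j)) in *. set (f := E (S (S j))) in *.
  assert (Hw : w <> (0,0)) by (apply H1; lia).
  assert (He : e <> (0,0)) by (apply H1; lia).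
  assert (Hf : f <> (0,0)) by (apply H1; lia).
  assert (Awe : angle w e <= th) by (apply H2; lia).
  assert (Aew : angle e w <= th) by (rewrite angle_sym; auto).
  assert (Aef : angle e f <= th) by (apply H2; lia).
  assert (Hth' : 0 <= th <= PI/2) by lra.
  assert (Def : 0 <= dot e f) by (eapply angle_dot_nonneg; eauto).
  assert (Dew : 0 <= dot e w) by (eapply angle_dot_nonneg; eauto).
  set (e' := vadd e (vscale t w)).
  assert (He' : e' <> (0,0)) by (apply between_nz; auto; lra).
  assert (Ne' : vnorm e <= vnorm e') by (apply between_norm; lra).
  assert (Aee' : angle e e' <= th) by (apply between1; auto; lra).
  assert (Ae'w : angle e' w <= th) by (apply between2; auto; lra).
  unfold infl_ev in Hinf. simpl pred in Hinf. fold w e f in Hinf.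
  assert (Hc1 : 0 < 1 - t) by lra.
  unfold dcc_ev, infl_ev, mvb. simpl pred. fold e' w e f. repeat split; auto.
  - intros i Hi. sd; subst; auto; apply vscale_nz; auto; lra.
  - intros i Hi. sd; subst; fold e' w e f.
    + rewrite angle_scale_l by lra. rewrite angle_sym. auto.
    + apply (same_side e); auto.
      replace (cross e e' * cross e f) with (t * (cross e w * cross e f)) by (unfold e'; rewrite cross_self_add; ring).
      apply Rmult_le_pos; lra.
    + rewrite angle_scale_r by lra. unfold w. try (replace j with (S i) by lia). apply H2; lia.
    + apply H2; auto.
  - intros i Hi. sd; subst; fold e' w e f.
    + intros [A B]; lra.
    + intros [A B]; lra.
    + rewrite vnorm_scale by lra. intros [A B]. apply (H3 i); [lia|]. split; auto. unfold w in Hsw.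
      try (replace j with (S i) in Hsw by lia). auto.
    + apply H3; auto.
  - intros m Hm1 Hm2 Hs Hi.
    assert (C : m = S j \/ m = S (S j) \/ m = j \/ S m = j \/
      (m <> S j /\ m <> S (S j) /\ m <> j /\ S m <> j)) by lia.
    destruct C as [C|[C|[C|[C|C]]]].
    + subst m. sd. fold e' in Hs. lra.
    + subst m. simpl pred in *. sd. fold e' w e f in Hs. fold e' w e f in Hi. fold e' w e f.
      set (g := E (S (S (S j)))) in *.
      assert (Hg : g <> (0,0)) by (apply H1; lia).
      assert (Afg : angle f g <= th) by (apply H2; lia).
      assert (Dfg : 0 <= dot f g) by (eapply angle_dot_nonneg; eauto).
      assert (Sgn : 0 < cross f e * cross f e') by (unfold e'; rewrite cross_add; apply small_sign; lra).
      assert (Ninf : ~ (0 < cross f e * cross f g)).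
      { intro X. apply Hi. assert (0 < (cross f e * cross f g) * (cross f e * cross f e')) by (apply Rmult_lt_0_compat; auto).
        assert (0 < cross f e * cross f e) by nra. nra. }
      assert (Aeg : angle e g <= th).
      { specialize (H4 (S (S j)) ltac:(lia) ltac:(lia) Hs). simpl pred in H4. apply H4. exact Ninf. }
      apply (same_side e); auto.
      pose proof (ident3 e f g) as I3. pose proof (dot_self_pos f Hf). rewrite (cross_anti f e) in Ninf.
      apply Rnot_lt_le in Ninf.
      assert (Q : 0 <= cross e f * cross f g) by nra.
      assert (Q2 : 0 <= cross e f * cross e g * dot f f).
      { replace (cross e f * cross e g * dot f f) with (dot f g * (cross e f * cross e f) + dot e f * (cross e f * cross f g))
          by (rewrite Rmult_assoc, I3; ring).
        apply Rplus_le_le_0_compat; apply Rmult_le_pos; nra. }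
      assert (Q3 : 0 <= cross e f * cross e g).
      { apply (Rmult_le_reg_r (dot f f)); auto. lra. }
      assert (Cef : 0 < cross e f * cross e f).
      { destruct (Req_dec (cross e f) 0) as [Z|Z]; [rewrite Z in Hinf; lra| nra]. }
      assert (Q4 : 0 <= cross e w * cross e g).
      { apply (Rmult_le_reg_r (cross e f * cross e f)); auto. rewrite Rmult_0_l.
        replace (cross e w * cross e g * (cross e f * cross e f)) with ((cross e w * cross e f) * (cross e f * cross e g)) by ring.
        apply Rmult_le_pos; lra. }
      replace (cross e e' * cross e g) with (t * (cross e w * cross e g)) by (unfold e'; rewrite cross_self_add; ring).
      apply Rmult_le_pos; lra.
    + subst m. sd. fold e' w e f in Hs. fold e' w e f in Hi. fold e' w e f.
      destruct j as [|j0]; [lia|]. simpl pred in *.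
      set (x := E j0) in *.
      assert (Hx : x <> (0,0)) by (apply H1; lia).
      assert (Axw : angle x w <= th) by (apply H2; lia).
      assert (Dxw : 0 <= dot x w) by (eapply angle_dot_nonneg; eauto).
      rewrite vnorm_scale in Hs by lra.
      assert (Hs' : vnorm w < l) by auto.
      assert (Ninf : ~ (0 < cross w x * cross w e)).
      { intro X. apply Hi. rewrite !cross_scale_l. unfold e'; rewrite cross_add_self.
        replace ((1 - t) * cross w x * ((1 - t) * cross w e)) with (((1-t)*(1-t)) * (cross w x * cross w e)) by ring.
        apply Rmult_lt_0_compat; nra. }
      assert (Axe : angle x e <= th).
      { specialize (H4 (S j0) ltac:(lia) ltac:(lia) Hs'). simpl pred in H4. apply H4. exact Ninf. }
      apply (same_side e); auto. rewrite angle_sym; auto.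
      pose proof (ident3 e w x) as I3. pose proof (dot_self_pos w Hw).
      rewrite (dot_sym x w) in Dxw.
      apply Rnot_lt_le in Ninf. rewrite (cross_anti w e) in Ninf.
      assert (Q1 : 0 <= cross w x * cross e w) by nra.
      assert (Q3 : 0 <= cross e x * cross e w * dot w w).
      { replace (cross e x * cross e w * dot w w) with (dot w x * (cross e w * cross e w) + dot e w * (cross w x * cross e w))
          by (symmetry; transitivity ((cross e x * dot w w) * cross e w); [ring| rewrite I3; ring]).
        apply Rplus_le_le_0_compat; apply Rmult_le_pos; nra. }
      assert (Q4 : 0 <= cross e x * cross e w).
      { apply (Rmult_le_reg_r (dot w w)); auto. lra. }
      replace (cross e x * cross e e') with (t * (cross e x * cross e w)) by (unfold e'; rewrite cross_self_add; ring).
      apply Rmult_le_pos; lra.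
    + subst j. sd. exfalso. apply (H3 m); [lia|]. split; auto.
    + destruct C as [C1 [C2 [C3 C4]]]. sd. apply H4; auto.
Qed.

Lemma evec_upd L q k z : vtx q k = z -> (forall i, i <> k -> vtx q i = vtx L i) ->
  forall i, evec q i = if Nat.eq_dec i k then vsub (vtx L (S k)) z
                       else if Nat.eq_dec (S i) k then vsub z (vtx L i) else evec L i.
Proof.
  intros Hk Ho i. unfold evec. sd.
  - rewrite e, <- Hk, (Ho (S k)) by lia. reflexivity.
  - rewrite e, Hk, Ho by lia. reflexivity.
  - rewrite !Ho by lia. reflexivity.
Qed.

Lemma fwd_list th l L q j t : 0 < th <= PI/2 -> dcc_path th l L -> (1 <= j)%nat -> (S (S j) < length L)%nat ->
  length q = length L ->
  vtx q (S j) = vadd (vtx L (S j)) (vscale t (evec L (S j))) ->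
  (forall i, i <> S j -> vtx q i = vtx L i) ->
  ~ vnorm (evec L j) < l -> vnorm (evec L (S j)) < l -> infl_ev (evec L) j -> 0 < t < 1 ->
  t * Rabs (cross (evec L (pred j)) (evec L (S j))) < Rabs (cross (evec L (pred j)) (evec L j)) ->
  dcc_path th l q.
Proof.
  intros Hth HL Hj1 Hj2 Hlen Hz Ho Hne Hs Hinf Ht Hsm.
  apply dcc_iff. rewrite Hlen. apply dcc_iff in HL.
  pose proof (move_fwd th l (length L) (evec L) j t Hth HL Hj1 Hj2 Hne Hs Hinf Ht Hsm) as M.
  apply (dcc_ev_ext _ _ _ (mvf (evec L) j t)); auto.
  intros i Hi. rewrite (evec_upd L q (S j) _ Hz Ho i). unfold mvf. sd; subst;
  apply pt_eq; unfold evec, vsub, vadd, vscale; simpl; ring.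
Qed.

Lemma bwd_list th l L q j t : 0 < th <= PI/2 -> dcc_path th l L -> (1 <= j)%nat -> (S (S j) < length L)%nat ->
  length q = length L ->
  vtx q j = vsub (vtx L j) (vscale t (evec L (pred j))) ->
  (forall i, i <> j -> vtx q i = vtx L i) ->
  ~ vnorm (evec L j) < l -> vnorm (evec L (pred j)) < l -> infl_ev (evec L) j -> 0 < t < 1 ->
  t * Rabs (cross (evec L (S j)) (evec L (pred j))) < Rabs (cross (evec L (S j)) (evec L j)) ->
  dcc_path th l q.
Proof.
  intros Hth HL Hj1 Hj2 Hlen Hz Ho Hne Hs Hinf Ht Hsm.
  apply dcc_iff. rewrite Hlen. apply dcc_iff in HL.
  pose proof (move_bwd th l (length L) (evec L) j t Hth HL Hj1 Hj2 Hne Hs Hinf Ht Hsm) as M.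
  apply (dcc_ev_ext _ _ _ (mvb (evec L) j t)); auto.
  intros i Hi. rewrite (evec_upd L q j _ Hz Ho i). unfold mvb.
  destruct j as [|j]; [lia|]. simpl pred in *. sd; subst; try (replace i with j by lia);
  apply pt_eq; unfold evec, vsub, vadd, vscale; simpl; ring.
Qed.

Definition sm (f : nat -> R) m := fold_right Rplus 0 (map f (seq 0 m)).

Lemma fold_plus_init a l0 : fold_right Rplus a l0 = fold_right Rplus 0 l0 + a.
Proof. induction l0; simpl; [ring| rewrite IHl0; ring]. Qed.

Lemma sm_S f m : sm f (S m) = sm f m + f m.
Proof. unfold sm. rewrite seq_S, map_app, fold_right_app. simpl. rewrite fold_plus_init. ring. Qed.

Lemma sm_diff_gen f g a m : (forall i, i <> a -> i <> S a -> f i = g i) ->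
  sm f m - sm g m = (if Nat.ltb a m then f a - g a else 0) + (if Nat.ltb (S a) m then f (S a) - g (S a) else 0).
Proof.
  intro H. induction m.
  - unfold sm; simpl. destruct a; simpl; ring.
  - rewrite !sm_S. destruct (Nat.eq_dec m a) as [->|Hma]; [|destruct (Nat.eq_dec m (S a)) as [->|Hmsa]].
    + replace (Nat.ltb a (S a)) with true by (symmetry; apply Nat.ltb_lt; lia).
      replace (Nat.ltb a a) with false in IHm by (symmetry; apply Nat.ltb_ge; lia).
      replace (Nat.ltb (S a) (S a)) with false by (symmetry; apply Nat.ltb_ge; lia).
      replace (Nat.ltb (S a) a) with false in IHm by (symmetry; apply Nat.ltb_ge; lia). lra.
    + replace (Nat.ltb a (S (S a))) with true by (symmetry; apply Nat.ltb_lt; lia).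
      replace (Nat.ltb a (S a)) with true in IHm by (symmetry; apply Nat.ltb_lt; lia).
      replace (Nat.ltb (S a) (S (S a))) with true by (symmetry; apply Nat.ltb_lt; lia).
      replace (Nat.ltb (S a) (S a)) with false in IHm by (symmetry; apply Nat.ltb_ge; lia). lra.
    + rewrite H by auto.
      replace (Nat.ltb a (S m)) with (Nat.ltb a m).
      2:{ destruct (Nat.ltb a m) eqn:E1; destruct (Nat.ltb a (S m)) eqn:E2; auto;
          [apply Nat.ltb_lt in E1; apply Nat.ltb_ge in E2| apply Nat.ltb_ge in E1; apply Nat.ltb_lt in E2]; lia. }
      replace (Nat.ltb (S a) (S m)) with (Nat.ltb (S a) m).
      2:{ destruct (Nat.ltb (S a) m) eqn:E1; destruct (Nat.ltb (S a) (S m)) eqn:E2; auto;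
          [apply Nat.ltb_lt in E1; apply Nat.ltb_ge in E2| apply Nat.ltb_ge in E1; apply Nat.ltb_lt in E2]; lia. }
      lra.
Qed.

Lemma sm_diff f g a m : (forall i, i <> a -> i <> S a -> f i = g i) -> (S a < m)%nat ->
  sm f m - sm g m = (f a - g a) + (f (S a) - g (S a)).
Proof.
  intros H Hm. rewrite (sm_diff_gen f g a m H).
  replace (Nat.ltb a m) with true by (symmetry; apply Nat.ltb_lt; lia).
  replace (Nat.ltb (S a) m) with true by (symmetry; apply Nat.ltb_lt; lia). ring.
Qed.

Lemma strict_tri u v t : cross u v <> 0 -> 0 < t -> vnorm (vadd u (vscale t v)) < vnorm u + t * vnorm v.
Proof.
  intros Hc Ht.
  pose proof (vnorm_sq u). pose proof (vnorm_sq v). pose proof (vnorm_sq (vadd u (vscale t v))).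
  pose proof (vnorm_ge0 u). pose proof (vnorm_ge0 v). pose proof (vnorm_ge0 (vadd u (vscale t v))).
  pose proof (lagrange u v).
  assert (E : dot (vadd u (vscale t v)) (vadd u (vscale t v)) = dot u u + 2*t*dot u v + t*t*dot v v)
    by (destruct u, v; unfold dot, vadd, vscale; simpl; ring).
  assert (Hd : dot u v < vnorm u * vnorm v).
  { assert (0 < cross u v * cross u v) by (destruct (Rlt_dec 0 (cross u v)); [nra|]; assert (cross u v < 0) by lra; nra).
    destruct (Rlt_dec (dot u v) 0); [assert (0 <= vnorm u * vnorm v) by (apply Rmult_le_pos; auto); lra|].
    apply sq_le_nonneg in H0 || idtac.
    assert (dot u v * dot u v < (vnorm u * vnorm v) * (vnorm u * vnorm v)) by nra.
    assert (0 <= vnorm u * vnorm v) by (apply Rmult_le_pos; auto). nra. }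
  assert (X : vnorm (vadd u (vscale t v)) * vnorm (vadd u (vscale t v)) < (vnorm u + t * vnorm v) * (vnorm u + t * vnorm v)).
  { rewrite H1, E. rewrite <- H, <- H0. nra. }
  assert (0 <= vnorm u + t * vnorm v) by nra. nra.
Qed.

Lemma evec_mvf L q j t : vtx q (S j) = vadd (vtx L (S j)) (vscale t (evec L (S j))) ->
  (forall i, i <> S j -> vtx q i = vtx L i) -> forall i, evec q i = mvf (evec L) j t i.
Proof.
  intros Hz Ho i. rewrite (evec_upd L q (S j) _ Hz Ho i). unfold mvf. sd; subst;
  apply pt_eq; unfold evec, vsub, vadd, vscale; simpl; ring.
Qed.

Lemma evec_mvb L q j t : (1 <= j)%nat -> vtx q j = vsub (vtx L j) (vscale t (evec L (pred j))) ->
  (forall i, i <> j -> vtx q i = vtx L i) -> forall i, evec q i = mvb (evec L) j t i.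
Proof.
  intros Hj Hz Ho i. rewrite (evec_upd L q j _ Hz Ho i). unfold mvb.
  destruct j as [|j]; [lia|]. simpl pred in *. sd; subst; try (replace i with j by lia);
  apply pt_eq; unfold evec, vsub, vadd, vscale; simpl; ring.
Qed.

Lemma len_fwd p q j t : (S (S j) < length p)%nat -> length q = length p ->
  (forall i, evec q i = mvf (evec p) j t i) -> cross (evec p j) (evec p (S j)) <> 0 -> 0 < t < 1 ->
  path_length q < path_length p.
Proof.
  intros Hn Hl He Hc Ht. unfold path_length.
  change (fold_right Rplus 0 (map (elen q) (seq 0 (pred (length q))))) with (sm (elen q) (pred (length q))).
  change (fold_right Rplus 0 (map (elen p) (seq 0 (pred (length p))))) with (sm (elen p) (pred (length p))).
  rewrite Hl.
  assert (Hq : forall i, elen q i = vnorm (mvf (evec p) j t i)) by (intro; unfold elen; rewrite He; auto).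
  assert (D : sm (elen q) (pred (length p)) - sm (elen p) (pred (length p)) =
     (elen q j - elen p j) + (elen q (S j) - elen p (S j))).
  { apply sm_diff; [|lia]. intros i H1 H2. rewrite Hq. unfold mvf. sd. reflexivity. }
  rewrite !Hq in D. unfold mvf in D. sd. unfold elen in D.
  rewrite vnorm_scale in D by lra. pose proof (strict_tri (evec p j) (evec p (S j)) t Hc ltac:(lra)).
  pose proof (vnorm_ge0 (evec p (S j))). unfold elen in *. nra.
Qed.

Lemma len_bwd p q j t : (1 <= j)%nat -> (S (S j) < length p)%nat -> length q = length p ->
  (forall i, evec q i = mvb (evec p) j t i) -> cross (evec p j) (evec p (pred j)) <> 0 -> 0 < t < 1 ->
  path_length q < path_length p.
Proof.
  intros Hj Hn Hl He Hc Ht. unfold path_length.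
  change (fold_right Rplus 0 (map (elen q) (seq 0 (pred (length q))))) with (sm (elen q) (pred (length q))).
  change (fold_right Rplus 0 (map (elen p) (seq 0 (pred (length p))))) with (sm (elen p) (pred (length p))).
  rewrite Hl.
  destruct j as [|j]; [lia|]. simpl pred in *.
  assert (Hq : forall i, elen q i = vnorm (mvb (evec p) (S j) t i)) by (intro; unfold elen; rewrite He; auto).
  assert (D : sm (elen q) (pred (length p)) - sm (elen p) (pred (length p)) =
     (elen q j - elen p j) + (elen q (S j) - elen p (S j))).
  { apply sm_diff; [|lia]. intros i H1 H2. rewrite Hq. unfold mvb. sd. reflexivity. }
  rewrite !Hq in D. unfold mvb in D. simpl pred in D. sd. unfold elen in D.
  rewrite vnorm_scale in D by lra. pose proof (strict_tri (evec p (S j)) (evec p j) t Hc ltac:(lra)).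
  pose proof (vnorm_ge0 (evec p j)). unfold elen in *. nra.
Qed.

Definition upd (p : list pt) k z := map (fun i => if Nat.eq_dec i k then z else vtx p i) (seq 0 (length p)).

Lemma upd_len p k z : length (upd p k z) = length p.
Proof. unfold upd. rewrite length_map, length_seq. auto. Qed.

Lemma upd_k p k z : (k < length p)%nat -> vtx (upd p k z) k = z.
Proof. intro. unfold upd. rewrite vtx_map by auto. sd. auto. Qed.

Lemma upd_o p k z : forall i, i <> k -> vtx (upd p k z) i = vtx p i.
Proof.
  intros i Hi. destruct (lt_dec i (length p)).
  - unfold upd. rewrite vtx_map by auto. sd. auto.
  - rewrite !vtx_out; auto; try lia. rewrite upd_len. lia.
Qed.

Lemma vtx_cons x L i : vtx (x :: L) (S i) = vtx L i.
Proof. reflexivity. Qed.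
Lemma evec_cons x L i : evec (x :: L) (S i) = evec L i.
Proof. reflexivity. Qed.

Lemma vtx_app_lt L y i : (i < length L)%nat -> vtx (L ++ [y]) i = vtx L i.
Proof. intro; unfold vtx; apply app_nth1; auto. Qed.
Lemma vtx_app_ge L y i : (length L <= i)%nat -> vtx (L ++ [y]) i = vtx [y] (i - length L).
Proof. intro; unfold vtx; apply app_nth2; auto. Qed.
Lemma evec_app L y i : (S i < length L)%nat -> evec (L ++ [y]) i = evec L i.
Proof. intro; unfold evec; rewrite !vtx_app_lt by lia; auto. Qed.

Lemma last_vtx (L : list pt) : last L (0,0) = vtx L (pred (length L)).
Proof.
  induction L as [|a L IH]; [reflexivity|]. destruct L as [|b L]; [reflexivity|].
  change (last (a :: b :: L) (0,0)) with (last (b :: L) (0,0)). rewrite IH. reflexivity.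
Qed.

Lemma pick_t A B : A <> 0 -> exists t, 0 < t < 1 /\ t * Rabs B < Rabs A.
Proof.
  intro HA. assert (a : 0 < Rabs A) by (apply Rabs_pos_lt; auto). pose proof (Rabs_pos B).
  set (t := Rabs A / (2 * (Rabs A + Rabs B))).
  assert (Ht2 : t * (2 * (Rabs A + Rabs B)) = Rabs A) by (unfold t; field; lra).
  assert (0 < t) by (unfold t; apply Rdiv_lt_0_compat; lra).
  exists t. split; [split|]; nra.
Qed.

Lemma last_upd p k z : (S k < length p)%nat -> last (upd p k z) (0,0) = last p (0,0).
Proof. intro H. rewrite !last_vtx, upd_len. apply upd_o. lia. Qed.

Lemma shift_len p j e : length (shift_path p j e) = length p.
Proof. unfold shift_path. rewrite length_map, length_seq. auto. Qed.

Lemma shift_evec p j eps i : (S i < length p)%nat -> evec (shift_path p j eps) i = scl (evec p) j (1-eps) i.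
Proof.
  intro H. unfold evec, shift_path. rewrite !vtx_map by lia. unfold scl.
  destruct (Nat.leb_spec (S i) j), (Nat.leb_spec i j); sd; subst; try (exfalso; lia);
  apply pt_eq; unfold evec, vsub, vadd, vscale; simpl; ring.
Qed.

Theorem lemma5 (theta l : R) (u U v V : pt) (p : list pt) (j : nat)
  (Htheta : 0 < theta <= PI / 2)
  (Hk : exists k : nat, 2 * PI / theta = INR k)
  (Hl : 0 < l)
  (HU : config l u U) (HV : config l v V)
  (Hdub : dubins_path theta l p u U v V)
  (Hnz : forall i, (S (S i) < length p)%nat -> turn p i <> 0)
  (Hj1 : (1 <= j)%nat) (Hj2 : (S (S j) < length p)%nat)
  (Hinfl : inflection p j) :
  exists eps, 0 < eps <= 1 /\ dcc_path theta l (shift_path p j eps).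
Proof.
  destruct Hdub as [Hp [Hst [Hen Hmin]]].
  pose proof PI_RGT_0 as PIpos.
  assert (HD := Hp). apply dcc_iff in HD.
  assert (Hinf : infl_ev (evec p) j) by (apply infl_iff; auto).
  assert (HD' := HD). destruct HD' as [D0 [D1 [D2 [D3 D4]]]].
  assert (Shift : forall eps, 0 < eps < 1 ->
    (vnorm (vscale (1-eps) (evec p j)) < l -> ~ vnorm (evec p (pred j)) < l /\ ~ vnorm (evec p (S j)) < l) ->
    dcc_path theta l (shift_path p j eps)).
  { intros eps He Hc. apply dcc_iff. rewrite shift_len.
    apply (dcc_ev_ext _ _ _ (scl (evec p) j (1-eps))).
    - intros; apply shift_evec; auto.
    - apply scale_dcc; auto; lra. }
  assert (Nb : vnorm (evec p j) < l -> ~ vnorm (evec p (pred j)) < l /\ ~ vnorm (evec p (S j)) < l).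
  { intro Hs. split; intro Hs'.
    - destruct j as [|j0]; [lia|]. apply (D3 j0); [lia|]. auto.
    - apply (D3 j); auto. }
  destruct (Rtotal_order (vnorm (evec p j)) l) as [Hlt|[Heq|Hgt]].
  - exists (1/2). split; [lra|]. apply Shift; [lra|]. intros _. apply Nb; auto.
  - assert (Hne : ~ vnorm (evec p j) < l) by lra.
    unfold infl_ev in Hinf.
    assert (Cew : cross (evec p j) (evec p (pred j)) <> 0).
    { intro Z. rewrite Z in Hinf. lra. }
    assert (Cef : cross (evec p j) (evec p (S j)) <> 0).
    { intro Z. rewrite Z in Hinf. lra. }
    destruct Hst as [_ [Hu0 Hsd]]. destruct Hen as [_ [Hv0 Hed]].
    destruct (Rlt_dec (vnorm (evec p (S j))) l) as [HsS|HsS].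
    + exfalso.
      destruct (pick_t (cross (evec p (pred j)) (evec p j)) (cross (evec p (pred j)) (evec p (S j)))) as [t [Ht Hts]].
      { rewrite cross_anti. intro Z. apply Cew. lra. }
      set (z := vadd (vtx p (S j)) (vscale t (evec p (S j)))).
      set (q := upd p (S j) z).
      assert (Ql : length q = length p) by apply upd_len.
      assert (Qk : vtx q (S j) = z) by (apply upd_k; lia).
      assert (Qo : forall i, i <> S j -> vtx q i = vtx p i) by (apply upd_o).
      assert (Hq : dcc_path theta l q) by (apply (fwd_list theta l p q j t); auto; lia).
      assert (Hqs : starts_at theta l q u U).
      { split; [intro Z; apply (f_equal (@length pt)) in Z; rewrite Ql in Z; simpl in Z; lia|].
        split; [rewrite Qo by lia; auto|].
        destruct j as [|j]; [lia|].
        apply (fwd_list theta l (vsub u U :: p) (vsub u U :: q) (S (S j)) t); auto; try (simpl; lia).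
        all: try (intros i Hi; destruct i; [reflexivity|]; rewrite !vtx_cons; apply Qo; lia).
        all: try (unfold infl_ev; simpl pred; rewrite !evec_cons; auto; fail).
        all: try (simpl pred; rewrite !evec_cons; auto; fail).
        all: try (rewrite !vtx_cons; simpl pred; rewrite !evec_cons, ?vtx_cons; auto; fail). }
      assert (Hqe : ends_at theta l q v V).
      { split; [intro Z; apply (f_equal (@length pt)) in Z; rewrite Ql in Z; simpl in Z; lia|].
        split; [unfold q; rewrite last_upd by lia; auto|].
        apply (fwd_list theta l (p ++ [vadd v V]) (q ++ [vadd v V]) j t); auto;
          try (rewrite ?length_app, ?Ql; simpl; lia).
        - rewrite !vtx_app_lt by lia. rewrite evec_app by lia. auto.
        - intros i Hi. destruct (lt_dec i (length p)).
          + rewrite !vtx_app_lt by lia. apply Qo; auto.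
          + rewrite !vtx_app_ge by lia. rewrite Ql. auto.
        - rewrite evec_app by lia. auto.
        - rewrite evec_app by lia. auto.
        - unfold infl_ev. rewrite !evec_app by lia. auto.
        - rewrite !evec_app by lia. auto. }
      pose proof (Hmin q Hq Hqs Hqe).
      assert (path_length q < path_length p).
      { apply (len_fwd p q j t); auto. apply evec_mvf; auto. }
      lra.
    + destruct (Rlt_dec (vnorm (evec p (pred j))) l) as [HsP|HsP].
      * exfalso.
        destruct (pick_t (cross (evec p (S j)) (evec p j)) (cross (evec p (S j)) (evec p (pred j)))) as [t [Ht Hts]].
        { rewrite cross_anti. intro Z. apply Cef. lra. }
        set (z := vsub (vtx p j) (vscale t (evec p (pred j)))).
        set (q := upd p j z).
        assert (Ql : length q = length p) by apply upd_len.
        assert (Qk : vtx q j = z) by (apply upd_k; lia).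
        assert (Qo : forall i, i <> j -> vtx q i = vtx p i) by (apply upd_o).
        assert (Hq : dcc_path theta l q) by (apply (bwd_list theta l p q j t); auto; lia).
        assert (Hqs : starts_at theta l q u U).
        { split; [intro Z; apply (f_equal (@length pt)) in Z; rewrite Ql in Z; simpl in Z; lia|].
          split; [rewrite Qo by lia; auto|].
          destruct j as [|j]; [lia|].
          apply (bwd_list theta l (vsub u U :: p) (vsub u U :: q) (S (S j)) t); auto; try (simpl; lia).
          all: try (intros i Hi; destruct i; [reflexivity|]; rewrite !vtx_cons; apply Qo; lia).
          all: try (unfold infl_ev; simpl pred; rewrite !evec_cons; auto; fail).
          all: try (simpl pred; rewrite !evec_cons; auto; fail).
          all: try (rewrite !vtx_cons; simpl pred; rewrite !evec_cons, ?vtx_cons; auto; fail). }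
        assert (Hqe : ends_at theta l q v V).
        { split; [intro Z; apply (f_equal (@length pt)) in Z; rewrite Ql in Z; simpl in Z; lia|].
          split; [unfold q; rewrite last_upd by lia; auto|].
          apply (bwd_list theta l (p ++ [vadd v V]) (q ++ [vadd v V]) j t); auto;
            try (rewrite ?length_app, ?Ql; simpl; lia).
          - rewrite !vtx_app_lt by lia. rewrite evec_app by lia. auto.
          - intros i Hi. destruct (lt_dec i (length p)).
            + rewrite !vtx_app_lt by lia. apply Qo; auto.
            + rewrite !vtx_app_ge by lia. rewrite Ql. auto.
          - rewrite evec_app by lia. auto.
          - rewrite evec_app by lia. auto.
          - unfold infl_ev. rewrite !evec_app by lia. auto.
          - rewrite !evec_app by lia. auto. }
        pose proof (Hmin q Hq Hqs Hqe).
        assert (path_length q < path_length p).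
        { apply (len_bwd p q j t); auto. apply evec_mvb; auto. }
        lra.
      * exists (1/2). split; [lra|]. apply Shift; [lra|]. intros _. split; auto.
  - set (N := vnorm (evec p j)) in *.
    assert (HN : 0 < N) by lra.
    set (c := Rmax (1/2) (l / N)).
    assert (Hc1 : 1/2 <= c) by apply Rmax_l.
    assert (Hc2 : l / N <= c) by apply Rmax_r.
    assert (Hc3 : c < 1).
    { unfold c. apply Rmax_lub_lt; [lra|]. apply (Rmult_lt_reg_r N); auto. unfold Rdiv. rewrite Rmult_assoc, Rinv_l by lra. lra. }
    assert (HcN : l <= c * N).
    { apply (Rmult_le_compat_r N) in Hc2; [|lra]. unfold Rdiv in Hc2. rewrite Rmult_assoc, Rinv_l in Hc2 by lra. lra. }
    exists (1 - c). split; [lra|]. apply Shift; [lra|].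
    intro X. exfalso. rewrite vnorm_scale in X by lra. replace (1 - (1 - c)) with c in X by ring. fold N in X. lra.
Qed.
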